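(* Let $F$ be a strictly increasing toxicity-rate function with values in $[0,1]$, let $d_1<\dots<d_m$ be fixed dose levels, and let $p\in(0,1/2)$ be the target rate. Suppose that for some index $u^*\ge 2$ we have $F(d_{u^*})=p$ (so $d_{u^*}$ is the MTD) and $F(d_{u^*-1})<p$. Consider the point design defined in the context, using cohorts of size $k\ge1$, started at a dose below $d_{u^*}$, with toxicity responses independent $\mathrm{Bernoulli}(F(x))$ at the assigned dose $x$. Then with positive probability the dose allocations do not converge to $d_{u^*}$.
   Context: Point design: cohorts of $k$ subjects are treated successively, the first at a chosen starting dose. For each level $d_u$ with observations, $\hat F(d_u)$ is the observed toxicity frequency at $d_u$ (possibly monotonized across levels by isotonic regression). After each cohort, the next cohort is allocated to the level whose $\hat F(d_u)$ is closest to $p$; except that if the highest dose $d_u$ for which an estimate is available has $\hat F(d_u)<p$, the design escalates to $d_{u+1}$ (boundary permitting), and if the lowest dose $d_u$ with an estimate has $\hat F(d_u)>p$, it de-escalates to $d_{u-1}$ (boundary permitting). Convergence to $d_{u^*}$ means that from some cohort on, all cohorts are allocated to $d_{u^*}$. *)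

(* Defs.v *)
From HB Require Import structures.
From mathcomp Require Import all_boot all_order all_algebra.
From mathcomp Require Import all_classical all_reals all_analysis.
Set Implicit Arguments. Unset Strict Implicit. Unset Printing Implicit Defensive.
Import Order.TTheory GRing.Theory Num.Theory.
Local Open Scope ring_scope.

(* Dose levels are indexed 1..m (as in the paper).
   An outcome array  y : nat -> nat -> nat -> bool  gives, for cohort n
   (n = 0,1,2,...), subject j (j < k) and dose level u, whether that subject
   would experience a toxicity when treated at level u ("potential outcome");
   only y n j (X n) is observed, where X n is the level allocated to cohort n.
   A history h : seq nat lists the levels allocated to cohorts 0..size h - 1. *)

Section PointDesign.
Variables (R : realType) (m k s : nat) (p : R) (y : nat -> nat -> nat -> bool).

Definition ntreated (h : seq nat) (u : nat) : nat := k * count (pred1 u) h.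

Definition ntox (h : seq nat) (u : nat) : nat :=
  \sum_(i < size h) (if nth 0 h i == u then \sum_(j < k) (y i j u : nat) else 0).

(* observed toxicity frequency \hat F(d_u) (meaningful when u \in h) *)
Definition fhat (h : seq nat) (u : nat) : R :=
  (ntox h u)%:R / (ntreated h u)%:R.

Definition observed_levels (h : seq nat) : seq nat :=
  [seq u <- iota 1 m | u \in h].

(* level whose estimate is closest to p; ties broken towards the lowest level *)
Definition closest (h : seq nat) : nat :=
  let vs := observed_levels h in
  foldl (fun b u => if `|fhat h u - p| < `|fhat h b - p| then u else b)
        (head s vs) (behead vs).

Definition next_level (h : seq nat) : nat :=
  let vs := observed_levels h in
  let lo := head s vs in
  let hi := last s vs in
  if (fhat h hi < p) && (hi < m)%N then hi.+1
  else if (p < fhat h lo) && (1 < lo)%N then lo.-1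
  else closest h.

Fixpoint allocs (n : nat) : seq nat :=
  match n with
  | 0 => [:: s]
  | n'.+1 => rcons (allocs n') (next_level (allocs n'))
  end.

Definition alloc (n : nat) : nat := last s (allocs n).

Definition converges_to (u : nat) : Prop :=
  exists N, forall n, (N <= n)%N -> alloc n = u.

End PointDesign.

Local Open Scope classical_set_scope.
Definition mutually_independent_bool {d : measure_display} {T : measurableType d}
  {R : realType} (P : probability T R) {I : eqType} (Z : I -> T -> bool) : Prop :=
  forall (J : seq I) (b : I -> bool), uniq J ->
    fine (P (\bigcap_(i in [set` J]) [set w | Z i w = b i]))
    = \prod_(i <- J) fine (P [set w | Z i w = b i]).

(* Main.v *)
Require Import Defs.
From HB Require Import structures.
From mathcomp Require Import all_boot all_order all_algebra.
From mathcomp Require Import all_classical all_reals all_analysis.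
From mathcomp Require Import lra zify.
Import Order.TTheory GRing.Theory Num.Theory.
Local Open Scope ring_scope.
Local Open Scope classical_set_scope.

Lemma prob_part (R : realType) (d : measure_display) (T : measurableType d)
  (P : probability T R) (I : eqType) (Z : I -> T -> bool) (J : seq I) (b : I -> bool) :
  mutually_independent_bool P Z ->
  (forall i, measurable [set w | Z i w = true]) ->
  (forall i, i \in J -> 0 < fine (P [set w | Z i w = b i])) ->
  exists A : set T, measurable A /\ (0 < P A)%E /\
    (forall w, A w -> forall i, i \in J -> Z i w = b i).
Proof.
move=> hind hmeas hpos.
have mset : forall i, measurable [set w | Z i w = b i].
  move=> i; case hb: (b i); first exact: hmeas.
  have -> : [set w | Z i w = false] = ~` [set w | Z i w = true].
    apply/seteqP; split=> w /=; first by move=> ->.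
    by case: (Z i w).
  exact: measurableC.
exists (\bigcap_(i in [set` undup J]) [set w | Z i w = b i]); split; [|split].
- apply: fin_bigcap_measurable; first by apply/finite_seqP; exists (undup J).
  by move=> i _; exact: mset.
- have := hind (undup J) b (undup_uniq J).
  have hp : 0 < \prod_(i <- undup J) fine (P [set w | Z i w = b i]).
    rewrite big_seq; apply: prodr_gt0 => i; rewrite mem_undup; exact: hpos.
  move=> heq; rewrite -heq in hp.
  move: hp; case: (P _) => [r| |] //=.
  by rewrite ltxx.
- move=> w hw i iJ; apply: hw => /=; by rewrite mem_undup.
Qed.
Section Det.
Variables (R : realType) (m k s : nat) (p : R) (y : nat -> nat -> nat -> bool).
Hypothesis hk : (1 <= k)%N.
Hypothesis hp0 : 0 < p.
Hypothesis hp1 : p < 1 / 2.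

Local Notation fh := (fhat R k y).

Lemma ntreated_sum h u :
  ntreated k h u = (\sum_(i < size h) (if nth 0%N h i == u then k else 0))%N.
Proof.
rewrite /ntreated -sum1_count (big_nth 0%N) big_mkord big_mkcond /=.
rewrite big_distrr /=; apply: eq_bigr => i _.
by case: (_ == _); rewrite ?muln1 ?muln0.
Qed.

Lemma ntox_le h u : (ntox k y h u <= ntreated k h u)%N.
Proof.
rewrite ntreated_sum /ntox; apply: leq_sum => i _.
case: (_ == _) => //.
rewrite -[X in (_ <= X)%N]card_ord -sum1_card; apply: leq_sum => j _.
by case: (y _ _ _).
Qed.

Lemma ntox_all h u :
  (forall i, (i < size h)%N -> nth 0%N h i = u -> forall j, (j < k)%N -> y i j u) ->
  ntox k y h u = ntreated k h u.
Proof.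
move=> H; rewrite ntreated_sum /ntox; apply: eq_bigr => i _.
case: eqP => // e.
rewrite -[X in _ = X]card_ord -sum1_card; apply: eq_bigr => j _.
by rewrite H.
Qed.

Lemma fhat_ge0 h u : 0 <= fh h u.
Proof. by rewrite /fhat divr_ge0. Qed.

Lemma fhat_le1 h u : fh h u <= 1.
Proof.
rewrite /fhat; have := ntox_le h u.
case: (ntreated k h u) => [|n].
  by rewrite invr0 mulr0.
move=> hle; rewrite ler_pdivrMr ?ltr0Sn // mul1r ler_nat //.
Qed.

Lemma fhat_one h u :
  u \in h ->
  (forall i, (i < size h)%N -> nth 0%N h i = u -> forall j, (j < k)%N -> y i j u) ->
  fh h u = 1.
Proof.
move=> uh H; rewrite /fhat ntox_all // divff // pnatr_eq0 /ntreated muln_eq0.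
rewrite negb_or -lt0n hk /= -lt0n -has_count has_pred1 //.
Qed.

Lemma fhat_zero h u :
  (forall i, (i < size h)%N -> nth 0%N h i = u -> forall j, (j < k)%N -> ~~ y i j u) ->
  fh h u = 0.
Proof.
move=> H; rewrite /fhat /ntox big1 ?mul0r // => i _.
case: eqP => // e; rewrite big1 // => j _.
by rewrite (negbTE (H _ (ltn_ord i) e _ (ltn_ord j))).
Qed.

Lemma fhat_rcons h x u : x != u -> fh (rcons h x) u = fh h u.
Proof.
move=> xu; rewrite /fhat /ntreated -cats1 count_cat /= (negbTE xu) !addn0 cats1.
congr (_%:R / _); rewrite /ntox size_rcons big_ord_recr /= nth_rcons ltnn eqxx (negbTE xu) addn0.
apply: eq_bigr => i _; by rewrite nth_rcons ltn_ord.
Qed.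

Lemma foldl_keep (f : nat -> R) (l : seq nat) b :
  (forall u, u \in l -> ~~ (`|f u - p| < `|f b - p|)) ->
  foldl (fun b u => if `|f u - p| < `|f b - p| then u else b) b l = b.
Proof.
elim: l => [|a l IH] //= H.
rewrite (negbTE (H a (mem_head _ _))) IH // => u ul.
by apply: H; rewrite in_cons ul orbT.
Qed.

Lemma next_inv h :
  (1 \in h) -> (exists w, w \in h /\ (1 < w)%N /\ (w <= m)%N) ->
  (forall w, w \in h -> w != 1%N -> fh h w = 1) ->
  next_level m k s p y h = 1%N.
Proof.
move=> h1 [w [wh [w1 wm]]] hall.
have [m' em] : exists m', m = m'.+1.
  by case: (m) wm => [|m'] wm; [move: (leq_trans w1 wm)|exists m'].
rewrite em in wm *.
have hobs : observed_levels m'.+1 h = 1%N :: [seq u <- iota 2 m' | u \in h].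
  by rewrite /observed_levels /= h1.
set rest := [seq u <- iota 2 m' | u \in h] in hobs.
have restP : forall u, u \in rest -> u \in h /\ u != 1%N.
  move=> u; rewrite mem_filter mem_iota => /andP [-> /andP [u2 _]]; split=> //.
  by case: u u2 => [|[|u]].
have wrest : w \in rest by rewrite mem_filter wh mem_iota w1 /= -addn1 addnC leq_add2l -ltnS.
have hi : last 1%N rest \in rest.
  by case: rest wrest {hobs restP} => [|a l] //= _; apply: mem_last.
have hle : forall f : R, 0 <= f <= 1 -> ~~ (`|1 - p| < `|f - p|).
  move=> f /andP [f0 f1]; rewrite -leNgt (ger0_norm (x := 1 - p)); last by have a := hp0; have b := hp1; lra.
  have a := hp0; have b := hp1; rewrite ler_norml; apply/andP; split; lra.
rewrite /next_level hobs /=.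
have [hih hin1] := restP _ hi.
rewrite hall //.
have -> : (1 < p) = false by apply/negbTE; rewrite -leNgt; have a := hp0; have b := hp1; lra.
rewrite andbF /closest hobs /=.
apply: foldl_keep => u /restP [uh un1]; rewrite hall //.
by apply: hle; rewrite fhat_ge0 fhat_le1.
Qed.

Definition Inv (h : seq nat) : Prop :=
  [/\ 1%N \in h, (exists w, w \in h /\ (1 < w)%N /\ (w <= m)%N) &
      (forall w, w \in h -> w != 1%N -> fh h w = 1)].

Lemma Inv_rcons h : Inv h -> Inv (rcons h 1%N).
Proof.
case=> h1 [w [wh ww]] hall; split.
- by rewrite mem_rcons in_cons h1 orbT.
- by exists w; rewrite mem_rcons in_cons wh orbT.
- move=> u; rewrite mem_rcons in_cons => /orP [/eqP -> //|uh] un1.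
  by rewrite fhat_rcons 1?eq_sym // hall.
Qed.

Lemma Inv_next h : Inv h -> next_level m k s p y h = 1%N.
Proof. by case=> h1 hw hall; apply: next_inv. Qed.

Lemma Inv_forever N : Inv (allocs m k s p y N) ->
  forall n, alloc m k s p y (N + n).+1 = 1%N.
Proof.
move=> H.
have Hn : forall n, Inv (allocs m k s p y (N + n)).
  elim=> [|n IH]; first by rewrite addn0.
  by rewrite addnS /= Inv_next //; apply: Inv_rcons.
by move=> n; rewrite /alloc /= last_rcons Inv_next.
Qed.

Lemma not_conv N u : u != 1%N -> Inv (allocs m k s p y N) -> ~ converges_to m k s p y u.
Proof.
move=> u1 H [N' HN].
have e := HN (N + N').+1 (leqW (leq_addl _ _)).
by rewrite Inv_forever // in e; rewrite -e eqxx in u1.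
Qed.

Lemma mem_vs h u : u \in s :: observed_levels m h -> s \in h -> u \in h.
Proof.
rewrite in_cons => /orP [/eqP -> //|]; by rewrite mem_filter => /andP [].
Qed.

Lemma prefix_s2 : (2 <= s)%N -> (s <= m)%N ->
  (forall i j, (i < s.-1)%N -> (j < k)%N -> y i j (s - i)) ->
  Inv (allocs m k s p y s.-1).
Proof.
move=> s2 sm Hy.
have pl1 : p < 1 by have a := hp1; lra.
pose f := fun i => (s - i)%N.
have memh : forall n u, u \in mkseq f n -> exists2 i, (i < n)%N & u = f i.
  move=> n u /mapP [i]; rewrite mem_iota add0n => /andP [_ hi] ->; by exists i.
have inh : forall n i, (i < n)%N -> f i \in mkseq f n.
  by move=> n i hi; apply/mapP; exists i => //; rewrite mem_iota.
have fh1 : forall n, (n < s)%N -> forall u, u \in mkseq f n.+1 -> u != 1%N ->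
    fh (mkseq f n.+1) u = 1.
  move=> n ns u uh u1; apply: fhat_one => // i; rewrite size_mkseq => hi.
  rewrite nth_mkseq // /f => e j hj; rewrite -e; apply: Hy => //.
  move: u1; rewrite -e => /eqP u1; lia.
have claim : forall n, (n <= s.-1)%N -> allocs m k s p y n = mkseq f n.+1.
  elim=> [|n IH] hn; first by rewrite /mkseq /= /f subn0.
  rewrite /= IH ?(ltnW hn) // [in RHS]mkseqS; congr rcons.
  set h := mkseq f n.+1.
  have hall : forall u, u \in h -> fh h u = 1.
    move=> u uh; apply: fh1 => //; first lia.
    case: (memh _ _ uh) => i hi ->; apply/eqP; rewrite /f; lia.
  have sh : s \in h by have := inh n.+1 0%N isT; rewrite /f subn0.
  rewrite /next_level.
  rewrite /next_level /=.
  rewrite (hall _ (mem_vs _ _ (mem_last s (observed_levels m h)) sh)).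
  have -> : (1 < p) = false by apply/negbTE; rewrite -leNgt ltW.
  have snv : (s - n)%N \in observed_levels m h.
    rewrite mem_filter mem_iota (inh n.+1 n (ltnSn n)) /=; apply/andP; split; lia.
  have hsort : sorted ltn (observed_levels m h).
    exact: (sorted_filter ltn_trans _ (iota_ltn_sorted 1 m)).
  case e : (observed_levels m h) snv hsort => [|a l] //= snv hsort.
  have ah : a \in h by apply: (mem_vs h a _ sh); rewrite e !in_cons eqxx orbT.
  have alo : (s - n <= a)%N by case: (memh _ _ ah) => i hi ->; rewrite /f; lia.
  have aeq : a = (s - n)%N.
    move: snv; rewrite in_cons => /orP [/eqP -> //|sl].
    have := order_path_min ltn_trans hsort => /allP /(_ _ sl); lia.
  rewrite (hall _ ah) pl1 /=.
  have -> : (1 < a)%N by lia.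
  by rewrite aeq /f subnS.
have e : allocs m k s p y s.-1 = mkseq f s.
  by rewrite claim // prednK //; lia.
rewrite e; split.
- have := inh s s.-1 (ltac:(lia)); rewrite /f.
  have -> : (s - s.-1 = 1)%N by lia.
  done.
- exists s; split; [|split] => //; have := inh s 0%N (ltac:(lia)); by rewrite /f subn0.
- have -> : s = s.-1.+1 by lia.
  move=> w wh w1; apply: fh1 => //; lia.
Qed.

Lemma prefix_s1 : s = 1%N -> (2 <= m)%N ->
  (forall j, (j < k)%N -> ~~ y 0 j 1) -> (forall j, (j < k)%N -> y 1 j 2) ->
  Inv (allocs m k s p y 1).
Proof.
move=> es m2 Hy0 Hy1.
have sh : s \in [:: s] by rewrite mem_seq1.
have -> : allocs m k s p y 1 = [:: s; 2%N].
  rewrite /= /next_level /=.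
  have -> : last s (observed_levels m [:: s]) = s.
    by apply/eqP; rewrite -mem_seq1; apply: mem_vs (mem_last _ _) sh.
  have -> : fh [:: s] s = 0.
    apply: fhat_zero => i /=; rewrite ltnS leqn0 => /eqP -> _ j hj.
    by rewrite es; apply: Hy0.
  by rewrite hp0 es m2.
rewrite es; split.
- by rewrite mem_head.
- by exists 2%N; rewrite !in_cons eqxx orbT.
- move=> w; rewrite !in_cons orbF => /orP [/eqP -> //|/eqP ->] _.
  apply: fhat_one; first by rewrite !in_cons eqxx orbT.
  move=> [|[|i]] //= _ _ j hj; exact: Hy1.
Qed.
End Det.

Theorem mainTheorem4
  (R : realType) (F : R -> R) (m : nat) (dose : nat -> R) (p : R)
  (ustar k s : nat)
  (d : measure_display) (T : measurableType d) (P : probability T R)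
  (Y : nat -> nat -> nat -> T -> bool) :
  (forall x y : R, x < y -> F x < F y) ->
  (forall x : R, 0 <= F x <= 1) ->
  (forall u v : nat, (1 <= u)%N -> (u < v)%N -> (v <= m)%N -> dose u < dose v) ->
  0 < p -> p < 1 / 2 ->
  (2 <= ustar)%N -> (ustar <= m)%N ->
  F (dose ustar) = p -> F (dose ustar.-1) < p ->
  (1 <= k)%N ->
  (1 <= s)%N -> (s < ustar)%N ->
  (forall n j u, measurable [set w | Y n j u w = true]) ->
  (forall n j u, (1 <= u <= m)%N -> P [set w | Y n j u w = true] = (F (dose u))%:E) ->
  mutually_independent_bool P (fun i : nat * nat * nat => Y i.1.1 i.1.2 i.2) ->
  exists A : set T, measurable A /\ (0 < P A)%E /\
    A `<=` [set w | ~ converges_to m k s p (fun n j u => Y n j u w) ustar].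
Proof.
move=> Finc F01 hdose hp0 hp1 us2 usm Fus _ hk s1 sus hmeas hP hind.
have m2 : (2 <= m)%N by apply: leq_trans usm.
have F1p : F (dose 1%N) < p by rewrite -Fus; apply/Finc/hdose.
have Fpos : forall u, (2 <= u)%N -> (u <= m)%N -> 0 < F (dose u).
  move=> u u2 um; apply: le_lt_trans (Finc _ _ (hdose 1%N u isT u2 um)).
  by case/andP: (F01 (dose 1%N)).
have posf : forall n j u, (1 <= u <= m)%N ->
    0 < fine (P [set w | Y n j u w = (u != 1%N)]).
  move=> n j u /andP [u1 um].
  case: (eqVneq u 1%N) => [eu|nu].
    subst u => /=.
    have -> : [set w | Y n j 1%N w = false] = ~` [set w | Y n j 1%N w = true].
      apply/seteqP; split=> w /=; first by move=> ->.
      by case: (Y n j 1%N w).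
    rewrite probability_setC // hP ?u1 ?um //.
    have : F (dose 1%N) < 1 by lra.
    by rewrite -EFinB /= subr_gt0.
  rewrite hP ?u1 ?um //=; apply: Fpos => //.
  by case: u u1 nu {um} => [|[|u]].
have sm : (s <= m)%N by apply: leq_trans usm; apply: ltnW.
have u1 : ustar != 1%N by case: ustar us2 {usm Fus sus hP} => [|[|]].
pose Z := fun i : nat * nat * nat => Y i.1.1 i.1.2 i.2.
pose b := fun i : nat * nat * nat => i.2 != 1%N.
case: (leqP 2 s) => s2.
- pose J := [seq ((i, j), (s - i)%N) | i <- iota 0 s.-1, j <- iota 0 k].
  have hJ : forall i, i \in J -> 0 < fine (P [set w | Z i w = b i]).
    move=> i /allpairsP [[a j] [/= ha hj ->]]; rewrite /b /Z /=.
    apply: posf; move: ha; rewrite mem_iota; lia.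
  have [A [mA [PA hA]]] := @prob_part R d T P _ Z J b hind (fun i => hmeas _ _ _) hJ.
  exists A; split=> //; split=> // w Aw.
  apply: (@not_conv R m k s p _ hp0 hp1 s.-1) => //.
  apply: prefix_s2 => // i j hi hj.
  have := hA w Aw ((i, j), (s - i)%N).
  rewrite /Z /b /= => ->; first by apply/eqP; lia.
  by apply: (allpairs_f (fun i j => ((i, j), (s - i)%N))); rewrite mem_iota; lia.
- have es : s = 1%N by lia.
  pose J := [seq ((0%N, j), 1%N) | j <- iota 0 k] ++ [seq ((1%N, j), 2%N) | j <- iota 0 k].
  have hJ : forall i, i \in J -> 0 < fine (P [set w | Z i w = b i]).
    move=> i; rewrite mem_cat => /orP [] /mapP [j _ ->]; apply: posf; apply/andP; split => //=; lia.
  have [A [mA [PA hA]]] := @prob_part R d T P _ Z J b hind (fun i => hmeas _ _ _) hJ.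
  exists A; split=> //; split=> // w Aw.
  apply: (@not_conv R m k s p _ hp0 hp1 1%N) => //.
  apply: prefix_s1 => // j hj.
  + have := hA w Aw ((0%N, j), 1%N); rewrite /Z /b /= => -> //.
    by rewrite mem_cat; apply/orP; left; apply/mapP; exists j => //; rewrite mem_iota.
  + have := hA w Aw ((1%N, j), 2%N); rewrite /Z /b /= => -> //.
    by rewrite mem_cat; apply/orP; right; apply/mapP; exists j => //; rewrite mem_iota.
Qed.
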